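(* In the calculus $\lambda^{RE}$ described in the context: if $e_1\Rrightarrow e_2$, then for every constant $c$, $e_1\to^*c$ if and only if $e_2\to^*c$.
   Context: Syntax of $\lambda^{RE}$. Basic types $b ::= \mathsf{Bool}\mid\mathsf{Unit}$. Constants $c ::= \mathsf{true}\mid\mathsf{false}\mid\mathsf{unit}\mid (=_b)\mid (=_{(c,b)})$. Expressions $e ::= c\mid x\mid e\ e\mid \lambda x{:}\tau.\,e\mid \mathsf{BEq}_b\ e\ e\ e\mid \mathsf{XEq}_{x:\tau\to\tau}\ e\ e\ e$. Values $v ::= c\mid \lambda x{:}\tau.\,e\mid \mathsf{BEq}_b\ e\ e\ v\mid \mathsf{XEq}_{x:\tau\to\tau}\ e\ e\ v$. Types $\tau ::= \{x{:}b\mid e\}\mid x{:}\tau\to\tau\mid \mathsf{PEq}_{\tau}\{e\}\{e\}$. $e[x:=e']$ is capture-avoiding substitution. Reduction: evaluation contexts $E ::= \bullet\mid E\ e\mid v\ E\mid \mathsf{BEq}_b\ e\ e\ E\mid\mathsf{XEq}_{x:\tau\to\tau}\ e\ e\ E$; $E[e]\to E[e']$ if $e\to e'$; $(\lambda x{:}\tau.\,e)\ v\to e[x:=v]$; $(=_b)\ c_1\to(=_{(c_1,b)})$; $(=_{(c_1,b)})\ c_2\to\mathsf{true}$ if $c_1,c_2$ syntactically equal, else $\to\mathsf{false}$. $\to^*$ is the reflexive–transitive closure. Parallel reduction $e\Rrightarrow e'$ and $\tau\Rrightarrow\tau'$ is defined inductively: $x\Rrightarrow x$; $c\Rrightarrow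 c$; $\lambda x{:}\tau.e\Rrightarrow\lambda x{:}\tau'.e'$ if $\tau\Rrightarrow\tau'$, $e\Rrightarrow e'$; $e_1\ e_2\Rrightarrow e_1'\ e_2'$ if $e_i\Rrightarrow e_i'$; $(\lambda x{:}\tau.e)\ v\Rrightarrow e'[x:=v']$ if $e\Rrightarrow e'$ and $v\Rrightarrow v'$; $(=_b)\ c_1\Rrightarrow(=_{(c_1,b)})$; $(=_{(c_1,b)})\ c_2\Rrightarrow d$ where $d=\mathsf{true}$ if $c_1,c_2$ are syntactically equal and $d=\mathsf{false}$ otherwise; $\mathsf{BEq}_b\ e_l\ e_r\ e\Rrightarrow\mathsf{BEq}_b\ e_l'\ e_r'\ e'$ if $e_l\Rrightarrow e_l'$, $e_r\Rrightarrow e_r'$, $e\Rrightarrow e'$; $\mathsf{XEq}_{x:\tau_x\to\tau}\ e_l\ e_r\ e\Rrightarrow\mathsf{XEq}_{x:\tau_x'\to\tau'}\ e_l'\ e_r'\ e'$ if all five components parallel reduce; on types: $\{x{:}b\mid r\}\Rrightarrow\{x{:}b\mid r'\}$ if $r\Rrightarrow r'$; $x{:}\tau_x\to\tau\Rrightarrow x{:}\tau_x'\to\tau'$ if $\tau_x\Rrightarrow\tau_x'$, $\tau\Rrightarrow\tau'$; $\mathsf{PEq}_\tau\{e_l\}\{e_r\}\Rrightarrow\mathsf{PEq}_{\tau'}\{e_l'\}\{e_r'\}$ if all components parallel reduce. *)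

(* Defs.v *)
From Stdlib Require Import Arith Relations.

Inductive basic : Type := TBool | TUnit.

(* constants: true | false | unit | (=_b) | (=_(c,b)) *)
Inductive const : Type :=
  | CTrue | CFalse | CUnit
  | CEq (b : basic)
  | CEqC (c : const) (b : basic).

Definition basic_eq_dec : forall b1 b2 : basic, {b1 = b2} + {b1 <> b2}.
Proof. decide equality. Defined.

Definition const_eq_dec : forall c1 c2 : const, {c1 = c2} + {c1 <> c2}.
Proof. decide equality; apply basic_eq_dec. Defined.

(* Binders (de Bruijn):
   - ELam t e          : lambda x:t. e            (x bound in e)
   - EXEq tx t el er e : XEq_{x:tx -> t} el er e  (x bound in t)
   - TRefn b r         : {x:b | r}                (x bound in r)
   - TFun tx t         : x:tx -> t                (x bound in t) *)
Inductive expr : Type :=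
  | EConst (c : const)
  | EVar (n : nat)
  | EApp (e1 e2 : expr)
  | ELam (t : ty) (e : expr)
  | EBEq (b : basic) (el er e : expr)
  | EXEq (tx t : ty) (el er e : expr)
with ty : Type :=
  | TRefn (b : basic) (r : expr)
  | TFun (tx t : ty)
  | TPEq (t : ty) (el er : expr).

Fixpoint lift_e (d k : nat) (e : expr) : expr :=
  match e with
  | EConst c => EConst c
  | EVar n => if k <=? n then EVar (n + d) else EVar n
  | EApp e1 e2 => EApp (lift_e d k e1) (lift_e d k e2)
  | ELam t e => ELam (lift_t d k t) (lift_e d (S k) e)
  | EBEq b el er e => EBEq b (lift_e d k el) (lift_e d k er) (lift_e d k e)
  | EXEq tx t el er e =>
      EXEq (lift_t d k tx) (lift_t d (S k) t) (lift_e d k el) (lift_e d k er) (lift_e d k e)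
  end
with lift_t (d k : nat) (t : ty) : ty :=
  match t with
  | TRefn b r => TRefn b (lift_e d (S k) r)
  | TFun tx t => TFun (lift_t d k tx) (lift_t d (S k) t)
  | TPEq t el er => TPEq (lift_t d k t) (lift_e d k el) (lift_e d k er)
  end.

(* subst_e k v e : capture-avoiding substitution e[x_k := v] (the binder of
   index k is removed, so indices above k are decremented). *)
Fixpoint subst_e (k : nat) (v : expr) (e : expr) : expr :=
  match e with
  | EConst c => EConst c
  | EVar n =>
      if n =? k then lift_e k 0 v
      else if k <? n then EVar (pred n) else EVar n
  | EApp e1 e2 => EApp (subst_e k v e1) (subst_e k v e2)
  | ELam t e => ELam (subst_t k v t) (subst_e (S k) v e)
  | EBEq b el er e => EBEq b (subst_e k v el) (subst_e k v er) (subst_e k v e)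
  | EXEq tx t el er e =>
      EXEq (subst_t k v tx) (subst_t (S k) v t) (subst_e k v el) (subst_e k v er) (subst_e k v e)
  end
with subst_t (k : nat) (v : expr) (t : ty) : ty :=
  match t with
  | TRefn b r => TRefn b (subst_e (S k) v r)
  | TFun tx t => TFun (subst_t k v tx) (subst_t (S k) v t)
  | TPEq t el er => TPEq (subst_t k v t) (subst_e k v el) (subst_e k v er)
  end.

Definition subst0 (e v : expr) : expr := subst_e 0 v e.

Definition eq_result (c1 c2 : const) : const :=
  if const_eq_dec c1 c2 then CTrue else CFalse.

Inductive value : expr -> Prop :=
  | v_const c : value (EConst c)
  | v_lam t e : value (ELam t e)
  | v_beq b el er v : value v -> value (EBEq b el er v)
  | v_xeq tx t el er v : value v -> value (EXEq tx t el er v).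

(* small-step reduction, with evaluation contexts inlined *)
Inductive step : expr -> expr -> Prop :=
  | st_app_l e1 e1' e2 : step e1 e1' -> step (EApp e1 e2) (EApp e1' e2)
  | st_app_r v e2 e2' : value v -> step e2 e2' -> step (EApp v e2) (EApp v e2')
  | st_beq b el er e e' : step e e' -> step (EBEq b el er e) (EBEq b el er e')
  | st_xeq tx t el er e e' : step e e' -> step (EXEq tx t el er e) (EXEq tx t el er e')
  | st_beta t e v : value v -> step (EApp (ELam t e) v) (subst0 e v)
  | st_eq1 b c1 : step (EApp (EConst (CEq b)) (EConst c1)) (EConst (CEqC c1 b))
  | st_eq2 c1 b c2 :
      step (EApp (EConst (CEqC c1 b)) (EConst c2)) (EConst (eq_result c1 c2)).

Definition steps : expr -> expr -> Prop := clos_refl_trans expr step.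

Inductive par_e : expr -> expr -> Prop :=
  | pe_var x : par_e (EVar x) (EVar x)
  | pe_const c : par_e (EConst c) (EConst c)
  | pe_lam t t' e e' : par_t t t' -> par_e e e' -> par_e (ELam t e) (ELam t' e')
  | pe_app e1 e1' e2 e2' : par_e e1 e1' -> par_e e2 e2' -> par_e (EApp e1 e2) (EApp e1' e2')
  | pe_beta t e e' v v' : value v -> par_e e e' -> par_e v v' ->
      par_e (EApp (ELam t e) v) (subst0 e' v')
  | pe_eq1 b c1 : par_e (EApp (EConst (CEq b)) (EConst c1)) (EConst (CEqC c1 b))
  | pe_eq2 c1 b c2 :
      par_e (EApp (EConst (CEqC c1 b)) (EConst c2)) (EConst (eq_result c1 c2))
  | pe_beq b el el' er er' e e' : par_e el el' -> par_e er er' -> par_e e e' ->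
      par_e (EBEq b el er e) (EBEq b el' er' e')
  | pe_xeq tx tx' t t' el el' er er' e e' :
      par_t tx tx' -> par_t t t' -> par_e el el' -> par_e er er' -> par_e e e' ->
      par_e (EXEq tx t el er e) (EXEq tx' t' el' er' e')
with par_t : ty -> ty -> Prop :=
  | pt_refn b r r' : par_e r r' -> par_t (TRefn b r) (TRefn b r')
  | pt_fun tx tx' t t' : par_t tx tx' -> par_t t t' -> par_t (TFun tx t) (TFun tx' t')
  | pt_peq t t' el el' er er' : par_t t t' -> par_e el el' -> par_e er er' ->
      par_t (TPEq t el er) (TPEq t' el' er').

(* Main.v *)
Require Import Defs.
From Stdlib Require Import Lia Arith Relations.

Scheme expr_mut := Induction for expr Sort Prop with ty_mut := Induction for ty Sort Prop.
Combined Scheme expr_ty_mut from expr_mut, ty_mut.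

Fixpoint cnt_e (k : nat) (e : expr) : nat :=
  match e with
  | EConst _ => 0
  | EVar n => if n =? k then 1 else 0
  | EApp a b => cnt_e k a + cnt_e k b
  | ELam t e => cnt_t k t + cnt_e (S k) e
  | EBEq _ l r e => cnt_e k l + cnt_e k r + cnt_e k e
  | EXEq tx t l r e => cnt_t k tx + cnt_t (S k) t + cnt_e k l + cnt_e k r + cnt_e k e
  end
with cnt_t (k : nat) (t : ty) : nat :=
  match t with
  | TRefn _ r => cnt_e (S k) r
  | TFun tx t => cnt_t k tx + cnt_t (S k) t
  | TPEq t l r => cnt_t k t + cnt_e k l + cnt_e k r
  end.

Ltac var_tac :=
  repeat (simpl; match goal with
   | |- context [?a <=? ?b] => destruct (Nat.leb_spec a b)
   | |- context [?a =? ?b] => destruct (Nat.eqb_spec a b)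
   | |- context [?a <? ?b] => destruct (Nat.ltb_spec a b)
   end); try lia; try (f_equal; lia).

Ltac solve_ih := match goal with H : forall _, _ |- _ => apply H; lia end.
Ltac cong := simpl; f_equal; solve_ih.

Lemma lift_lift : (forall e d i j l m, l <= i -> m = i + j -> lift_e d m (lift_e j l e) = lift_e j l (lift_e d i e))
 /\ (forall t d i j l m, l <= i -> m = i + j -> lift_t d m (lift_t j l t) = lift_t j l (lift_t d i t)).
Proof.
  apply expr_ty_mut; intros; try cong.
  - var_tac.
Qed.

Lemma lift_lift2 : (forall e i j k l m, l <= j -> j <= l + k -> m = i + k -> lift_e i j (lift_e k l e) = lift_e m l e)
 /\ (forall t i j k l m, l <= j -> j <= l + k -> m = i + k -> lift_t i j (lift_t k l t) = lift_t m l t).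
Proof.
  apply expr_ty_mut; intros; try cong.
  - var_tac.
Qed.

Lemma lift_subst : (forall e d j k v m m', m = j + k -> m' = S m -> lift_e d m (subst_e j v e) = subst_e j (lift_e d k v) (lift_e d m' e))
 /\ (forall t d j k v m m', m = j + k -> m' = S m -> lift_t d m (subst_t j v t) = subst_t j (lift_e d k v) (lift_t d m' t)).
Proof.
  apply expr_ty_mut; intros; try cong.
  - var_tac. subst. apply (proj1 lift_lift); lia.
Qed.

Lemma cnt_lift_lt : (forall e x d k, x < k -> cnt_e x (lift_e d k e) = cnt_e x e)
 /\ (forall t x d k, x < k -> cnt_t x (lift_t d k t) = cnt_t x t).
Proof.
  apply expr_ty_mut; intros; simpl; try (repeat match goal with H : forall _, _ |- _ => rewrite H by lia; clear H end; reflexivity).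
  var_tac.
Qed.

Lemma cnt_lift_gap : (forall e x d k, k <= x -> x < k + d -> cnt_e x (lift_e d k e) = 0)
 /\ (forall t x d k, k <= x -> x < k + d -> cnt_t x (lift_t d k t) = 0).
Proof.
  apply expr_ty_mut; intros; simpl; try (repeat match goal with H : forall _, _ |- _ => rewrite H by lia; clear H end; reflexivity).
  var_tac.
Qed.

Lemma cnt_subst_lt : (forall e x i v, x < i -> cnt_e x (subst_e i v e) = cnt_e x e)
 /\ (forall t x i v, x < i -> cnt_t x (subst_t i v t) = cnt_t x t).
Proof.
  apply expr_ty_mut; intros; simpl; try (repeat match goal with H : forall _, _ |- _ => rewrite H by lia; clear H end; reflexivity).
  var_tac; subst; apply (proj1 cnt_lift_gap); lia.
Qed.

Lemma cnt_lift_ge : (forall e x d j m, j <= x -> m = x + d -> cnt_e m (lift_e d j e) = cnt_e x e)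
 /\ (forall t x d j m, j <= x -> m = x + d -> cnt_t m (lift_t d j t) = cnt_t x t).
Proof.
  apply expr_ty_mut; intros; simpl;
  try (repeat match goal with H : forall (x d j m : nat), _ |- _ => rewrite (H x) by lia; clear H
                            | H : forall (x d j m : nat), _ |- _ => rewrite (H (S x)) by lia; clear H end; reflexivity).
  var_tac.
Qed.

Lemma cnt_subst : (forall e i m k w, m = i + k -> cnt_e m (subst_e i w e) = cnt_e (S m) e + cnt_e i e * cnt_e k w)
 /\ (forall t i m k w, m = i + k -> cnt_t m (subst_t i w t) = cnt_t (S m) t + cnt_t i t * cnt_e k w).
Proof.
  apply expr_ty_mut; intros; simpl;
  try (repeat match goal with H : forall (i m k : nat) (w : expr), _ |- _ => rewrite (H _ _ k) by lia; clear H end; lia).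
  var_tac; subst. rewrite (proj1 cnt_lift_ge w k i 0 (i + k)) by lia. lia.
Qed.

Lemma subst_lift_cancel : (forall e i u d j, j <= i -> i <= j + d -> subst_e i u (lift_e (S d) j e) = lift_e d j e)
 /\ (forall t i u d j, j <= i -> i <= j + d -> subst_t i u (lift_t (S d) j t) = lift_t d j t).
Proof.
  apply expr_ty_mut; intros; try cong.
  var_tac.
Qed.

Lemma subst_lift_comm : (forall e m k i j v, j <= k -> m = k + i -> subst_e m v (lift_e i j e) = lift_e i j (subst_e k v e))
 /\ (forall t m k i j v, j <= k -> m = k + i -> subst_t m v (lift_t i j t) = lift_t i j (subst_t k v t)).
Proof.
  apply expr_ty_mut; intros; try cong.
  var_tac; subst; symmetry; apply (proj1 lift_lift2); lia.
Qed.

Lemma subst_subst : (forall e m m' i k v w, m = i + k -> m' = S m -> subst_e m v (subst_e i w e) = subst_e i (subst_e k v w) (subst_e m' v e))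
 /\ (forall t m m' i k v w, m = i + k -> m' = S m -> subst_t m v (subst_t i w t) = subst_t i (subst_e k v w) (subst_t m' v t)).
Proof.
  apply expr_ty_mut; intros; try cong.
  var_tac; subst.
  all: try (apply (proj1 subst_lift_comm); lia).
  all: try (symmetry; apply (proj1 subst_lift_cancel); lia).
Qed.

Inductive wpar_e : nat -> expr -> expr -> Prop :=
  | wpe_var x : wpar_e 0 (EVar x) (EVar x)
  | wpe_const c : wpar_e 0 (EConst c) (EConst c)
  | wpe_lam m n t t' e e' : wpar_t m t t' -> wpar_e n e e' -> wpar_e (m + n) (ELam t e) (ELam t' e')
  | wpe_app m n e1 e1' e2 e2' : wpar_e m e1 e1' -> wpar_e n e2 e2' -> wpar_e (m + n) (EApp e1 e2) (EApp e1' e2')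
  | wpe_beta m n t e e' v v' : value v -> wpar_e m e e' -> wpar_e n v v' ->
      wpar_e (m + cnt_e 0 e' * n + 1) (EApp (ELam t e) v) (subst0 e' v')
  | wpe_eq1 b c1 : wpar_e 0 (EApp (EConst (CEq b)) (EConst c1)) (EConst (CEqC c1 b))
  | wpe_eq2 c1 b c2 :
      wpar_e 0 (EApp (EConst (CEqC c1 b)) (EConst c2)) (EConst (eq_result c1 c2))
  | wpe_beq m1 m2 m3 b el el' er er' e e' : wpar_e m1 el el' -> wpar_e m2 er er' -> wpar_e m3 e e' ->
      wpar_e (m1 + m2 + m3) (EBEq b el er e) (EBEq b el' er' e')
  | wpe_xeq m1 m2 m3 m4 m5 tx tx' t t' el el' er er' e e' :
      wpar_t m1 tx tx' -> wpar_t m2 t t' -> wpar_e m3 el el' -> wpar_e m4 er er' -> wpar_e m5 e e' ->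
      wpar_e (m1 + m2 + m3 + m4 + m5) (EXEq tx t el er e) (EXEq tx' t' el' er' e')
with wpar_t : nat -> ty -> ty -> Prop :=
  | wpt_refn m b r r' : wpar_e m r r' -> wpar_t m (TRefn b r) (TRefn b r')
  | wpt_fun m n tx tx' t t' : wpar_t m tx tx' -> wpar_t n t t' -> wpar_t (m + n) (TFun tx t) (TFun tx' t')
  | wpt_peq m1 m2 m3 t t' el el' er er' : wpar_t m1 t t' -> wpar_e m2 el el' -> wpar_e m3 er er' ->
      wpar_t (m1 + m2 + m3) (TPEq t el er) (TPEq t' el' er').

Scheme wpar_e_mut := Induction for wpar_e Sort Prop with wpar_t_mut := Induction for wpar_t Sort Prop.
Combined Scheme wpar_mut from wpar_e_mut, wpar_t_mut.
Scheme par_e_mut := Induction for par_e Sort Prop with par_t_mut := Induction for par_t Sort Prop.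
Combined Scheme par_mut from par_e_mut, par_t_mut.

Lemma value_lift : forall v, value v -> forall d k, value (lift_e d k v).
Proof. induction 1; intros; simpl; constructor; auto. Qed.
Lemma value_subst : forall v, value v -> forall k u, value (subst_e k u v).
Proof. induction 1; intros; simpl; constructor; auto. Qed.

Lemma wpar_lift : (forall m e e', wpar_e m e e' -> forall d k, wpar_e m (lift_e d k e) (lift_e d k e'))
 /\ (forall m t t', wpar_t m t t' -> forall d k, wpar_t m (lift_t d k t) (lift_t d k t')).
Proof.
  apply wpar_mut; intros; simpl; try (constructor; auto; fail).
  - destruct (k <=? x); constructor.
  - unfold subst0. rewrite (proj1 lift_subst e' d 0 k v' k (S k)) by lia.
    rewrite <- (proj1 cnt_lift_lt e' 0 d (S k)) by lia.
    constructor; auto. apply value_lift; auto.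
Qed.

Lemma wpar_subst : (forall m e e', wpar_e m e e' -> forall k v v' n, wpar_e n v v' ->
    exists j, j <= m + cnt_e k e' * n /\ wpar_e j (subst_e k v e) (subst_e k v' e'))
 /\ (forall m t t', wpar_t m t t' -> forall k v v' n, wpar_e n v v' ->
    exists j, j <= m + cnt_t k t' * n /\ wpar_t j (subst_t k v t) (subst_t k v' t')).
Proof.
  apply wpar_mut; intros; simpl.
  - destruct (Nat.eqb_spec x k).
    + exists n. split. lia. apply (proj1 wpar_lift); auto.
    + exists 0. split. lia. destruct (k <? x); constructor.
  - exists 0; split; [lia| constructor].
  - destruct (H k v v' n0 H1) as [j1 [? ?]]. destruct (H0 (S k) v v' n0 H1) as [j2 [? ?]].
    exists (j1 + j2); split; [nia | constructor; auto].
  - destruct (H k v v' n0 H1) as [j1 [? ?]]. destruct (H0 k v v' n0 H1) as [j2 [? ?]].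
    exists (j1 + j2); split; [nia | constructor; auto].
  - destruct (H (S k) v1 v'0 n0 H1) as [j1 [? ?]]. destruct (H0 k v1 v'0 n0 H1) as [j2 [? ?]].
    exists (j1 + cnt_e 0 (subst_e (S k) v'0 e') * j2 + 1). split.
    + rewrite (proj1 cnt_subst_lt) by lia.
      unfold subst0. rewrite (proj1 cnt_subst e' 0 k k v') by lia. nia.
    + unfold subst0. rewrite (proj1 subst_subst e' k (S k) 0 k v'0 v') by lia.
      constructor; auto. apply value_subst; auto.
  - exists 0; split; [lia| constructor].
  - exists 0; split; [lia| constructor].
  - destruct (H k v v' n H2) as [j1 [? ?]]. destruct (H0 k v v' n H2) as [j2 [? ?]].
    destruct (H1 k v v' n H2) as [j3 [? ?]].
    exists (j1 + j2 + j3); split; [nia | constructor; auto].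
  - destruct (H k v v' n H4) as [j1 [? ?]]. destruct (H0 (S k) v v' n H4) as [j2 [? ?]].
    destruct (H1 k v v' n H4) as [j3 [? ?]]. destruct (H2 k v v' n H4) as [j4 [? ?]].
    destruct (H3 k v v' n H4) as [j5 [? ?]].
    exists (j1 + j2 + j3 + j4 + j5); split; [nia | constructor; auto].
  - destruct (H (S k) v v' n H0) as [j1 [? ?]].
    exists j1; split; [nia | constructor; auto].
  - destruct (H k v v' n0 H1) as [j1 [? ?]]. destruct (H0 (S k) v v' n0 H1) as [j2 [? ?]].
    exists (j1 + j2); split; [nia | constructor; auto].
  - destruct (H k v v' n H2) as [j1 [? ?]]. destruct (H0 k v v' n H2) as [j2 [? ?]].
    destruct (H1 k v v' n H2) as [j3 [? ?]].
    exists (j1 + j2 + j3); split; [nia | constructor; auto].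
Qed.

Lemma wpar_par : (forall m e e', wpar_e m e e' -> par_e e e') /\ (forall m t t', wpar_t m t t' -> par_t t t').
Proof. apply wpar_mut; intros; econstructor; eauto. Qed.

Lemma par_wpar : (forall e e', par_e e e' -> exists m, wpar_e m e e') /\ (forall t t', par_t t t' -> exists m, wpar_t m t t').
Proof.
  apply par_mut; intros;
  repeat match goal with H : exists _, _ |- _ => destruct H end; eexists; econstructor; eauto.
Qed.

Lemma par_subst0 : forall e e' v v', par_e e e' -> par_e v v' -> par_e (subst0 e v) (subst0 e' v').
Proof.
  intros. destruct (proj1 par_wpar _ _ H) as [m Hm]. destruct (proj1 par_wpar _ _ H0) as [n Hn].
  destruct (proj1 wpar_subst _ _ _ Hm 0 _ _ _ Hn) as [j [_ Hj]].
  exact (proj1 wpar_par _ _ _ Hj).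
Qed.

Lemma steps_step : forall a b, step a b -> steps a b.
Proof. intros; apply rt_step; auto. Qed.
Lemma steps_trans : forall a b c, steps a b -> steps b c -> steps a c.
Proof. intros; eapply rt_trans; eauto. Qed.
Lemma steps_refl : forall a, steps a a.
Proof. intros; apply rt_refl. Qed.

Lemma steps_app_l : forall a a' b, steps a a' -> steps (EApp a b) (EApp a' b).
Proof. induction 1; [apply steps_step; constructor; auto | apply steps_refl | eapply steps_trans; eauto]. Qed.
Lemma steps_app_r : forall v b b', value v -> steps b b' -> steps (EApp v b) (EApp v b').
Proof. induction 2; [apply steps_step; constructor; auto | apply steps_refl | eapply steps_trans; eauto]. Qed.
Lemma steps_beq : forall bb l r a a', steps a a' -> steps (EBEq bb l r a) (EBEq bb l r a').
Proof. induction 1; [apply steps_step; constructor; auto | apply steps_refl | eapply steps_trans; eauto]. Qed.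
Lemma steps_xeq : forall tx t l r a a', steps a a' -> steps (EXEq tx t l r a) (EXEq tx t l r a').
Proof. induction 1; [apply steps_step; constructor; auto | apply steps_refl | eapply steps_trans; eauto]. Qed.

Lemma value_no_step : forall v, value v -> forall e, ~ step v e.
Proof. induction 1; intros e0 H'; inversion H'; subst; eauto; eapply IHvalue; eauto. Qed.

Lemma value_par : forall v, value v -> forall v', par_e v v' -> value v'.
Proof. induction 1; intros v0 H'; inversion H'; subst; constructor; auto. Qed.

Lemma value_par_const : forall v c, value v -> par_e v (EConst c) -> v = EConst c.
Proof. intros v c Hv H; inversion H; subst; auto; inversion Hv. Qed.

Lemma value_par_lam : forall v t e, value v -> par_e v (ELam t e) -> exists t0 e0, v = ELam t0 e0 /\ par_e e0 e.
Proof. intros v t e Hv H; inversion H; subst; eauto; inversion Hv. Qed.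

Lemma L3 : forall N m a a', wpar_e m a a' -> m < N -> value a' ->
  exists a4, steps a a4 /\ value a4 /\ par_e a4 a'.
Proof.
  induction N; intros m a a' H Hm Hv; [lia|].
  induction H.
  - inversion Hv.
  - exists (EConst c); repeat split; [apply steps_refl|constructor|constructor].
  - exists (ELam t e); repeat split; [apply steps_refl|constructor|].
    apply pe_lam; [eapply (proj2 wpar_par) | eapply (proj1 wpar_par)]; eauto.
  - inversion Hv.
  - destruct (proj1 wpar_subst _ _ _ H0 0 _ _ _ H1) as [j [Hj Hw]].
    destruct (IHN j _ _ Hw ltac:(lia) Hv) as [a4 [? [? ?]]].
    exists a4; repeat split; auto. apply steps_trans with (subst0 e v); [apply steps_step; apply st_beta; auto | auto].
  - exists (EConst (CEqC c1 b)); repeat split; [apply steps_step; constructor|constructor|constructor].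
  - exists (EConst (eq_result c1 c2)); repeat split; [apply steps_step; constructor|constructor|constructor].
  - inversion Hv; subst. destruct (IHwpar_e3 ltac:(lia) ltac:(assumption)) as [a4 [? [? ?]]].
    exists (EBEq b el er a4); repeat split; [apply steps_beq; auto|constructor; auto|].
    constructor; auto; eapply (proj1 wpar_par); eauto.
  - inversion Hv; subst. destruct (IHwpar_e3 ltac:(lia) ltac:(assumption)) as [a4 [? [? ?]]].
    exists (EXEq tx t el er a4); repeat split; [apply steps_xeq; auto|constructor; auto|].
    constructor; auto; first [eapply (proj1 wpar_par) | eapply (proj2 wpar_par)]; eauto.
Qed.

Lemma L3' : forall a a', par_e a a' -> value a' -> exists a4, steps a a4 /\ value a4 /\ par_e a4 a'.
Proof. intros. destruct (proj1 par_wpar _ _ H) as [m Hm]. eapply (L3 (S m)); eauto. Qed.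

Lemma claimB : forall N m e1 e2, wpar_e m e1 e2 -> m < N -> forall e3, step e2 e3 ->
  exists e4, steps e1 e4 /\ par_e e4 e3.
Proof.
  induction N; intros m e1 e2 H Hm; [lia|].
  induction H; intros e3 Hs.
  - inversion Hs.
  - inversion Hs.
  - inversion Hs.
  - apply (proj1 wpar_par) in H as Hp. apply (proj1 wpar_par) in H0 as Hp0.
    inversion Hs; subst.
    + destruct (IHwpar_e1 ltac:(lia) _ H4) as [e4 [? ?]].
      exists (EApp e4 e2); split; [apply steps_app_l; auto | constructor; auto].
    + destruct (L3' _ _ Hp H3) as [a4 [? [? ?]]].
      destruct (IHwpar_e2 ltac:(lia) _ H5) as [e4 [? ?]].
      exists (EApp a4 e4); split; [|constructor; auto].
      eapply steps_trans; [apply steps_app_l; eauto | apply steps_app_r; auto].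
    + destruct (L3' _ _ Hp ltac:(constructor)) as [a4 [Ha1 [Ha2 Ha3]]].
      destruct (value_par_lam _ _ _ Ha2 Ha3) as [t0 [e0 [? ?]]]; subst.
      destruct (L3' _ _ Hp0 ltac:(assumption)) as [b4 [? [? ?]]].
      exists (subst0 e0 b4); split; [|apply par_subst0; auto].
      eapply steps_trans; [apply steps_app_l; eauto|].
      eapply steps_trans; [apply steps_app_r; [constructor|eauto]|].
      apply steps_step; constructor; auto.
    + destruct (L3' _ _ Hp ltac:(constructor)) as [a4 [Ha1 [Ha2 Ha3]]].
      rewrite (value_par_const _ _ Ha2 Ha3) in Ha1.
      destruct (L3' _ _ Hp0 ltac:(constructor)) as [b4 [Hb1 [Hb2 Hb3]]].
      rewrite (value_par_const _ _ Hb2 Hb3) in Hb1.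
      exists (EConst (CEqC c1 b)); split; [|constructor].
      eapply steps_trans; [apply steps_app_l; eauto|].
      eapply steps_trans; [apply steps_app_r; [constructor|eauto]|].
      apply steps_step; constructor.
    + destruct (L3' _ _ Hp ltac:(constructor)) as [a4 [Ha1 [Ha2 Ha3]]].
      rewrite (value_par_const _ _ Ha2 Ha3) in Ha1.
      destruct (L3' _ _ Hp0 ltac:(constructor)) as [b4 [Hb1 [Hb2 Hb3]]].
      rewrite (value_par_const _ _ Hb2 Hb3) in Hb1.
      exists (EConst (eq_result c1 c2)); split; [|constructor].
      eapply steps_trans; [apply steps_app_l; eauto|].
      eapply steps_trans; [apply steps_app_r; [constructor|eauto]|].
      apply steps_step; constructor.
  - destruct (proj1 wpar_subst _ _ _ H0 0 _ _ _ H1) as [j [Hj Hw]].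
    destruct (IHN j _ _ Hw ltac:(lia) _ Hs) as [e4 [? ?]].
    exists e4; split; auto. apply steps_trans with (subst0 e v); [apply steps_step; apply st_beta; auto | auto].
  - inversion Hs.
  - inversion Hs.
  - inversion Hs; subst. destruct (IHwpar_e3 ltac:(lia) _ ltac:(eassumption)) as [e4 [? ?]].
    exists (EBEq b el er e4); split; [apply steps_beq; auto|].
    constructor; auto; eapply (proj1 wpar_par); eauto.
  - inversion Hs; subst. destruct (IHwpar_e3 ltac:(lia) _ ltac:(eassumption)) as [e4 [? ?]].
    exists (EXEq tx t el er e4); split; [apply steps_xeq; auto|].
    constructor; auto; first [eapply (proj1 wpar_par) | eapply (proj2 wpar_par)]; eauto.
Qed.

Lemma forward : forall e1 e1', step e1 e1' -> forall e2, par_e e1 e2 -> exists e2', steps e2 e2' /\ par_e e1' e2'.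
Proof.
  induction 1; intros E2 Hp; inversion Hp; subst;
  try (exfalso; match goal with
        | Hv : value ?v, Hs : step ?v _ |- _ => exact (value_no_step _ Hv _ Hs)
        | Hs : step (ELam _ _) _ |- _ => exact (value_no_step _ (v_lam _ _) _ Hs)
        | Hs : step (EConst _) _ |- _ => inversion Hs
        end).
  - match goal with Hx : par_e e1 ?X, Hy : par_e e2 ?Y |- _ =>
      destruct (IHstep _ Hx) as [x [? ?]]; exists (EApp x Y); split; [apply steps_app_l; auto|constructor; auto] end.
  - match goal with Hx : par_e v ?X, Hy : par_e e2 ?Y |- _ =>
      destruct (IHstep _ Hy) as [x [? ?]]; exists (EApp X x); split; [apply steps_app_r; auto; eapply value_par; eauto|constructor; auto] end.
  - match goal with Hx : par_e e ?X |- _ =>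
      destruct (IHstep _ Hx) as [x [? ?]]; eexists; split; [apply steps_beq; eauto|constructor; eauto] end.
  - match goal with Hx : par_e e ?X |- _ =>
      destruct (IHstep _ Hx) as [x [? ?]]; eexists; split; [apply steps_xeq; eauto|constructor; eauto] end.
  - match goal with Hx : par_e (ELam t e) ?X, Hy : par_e v ?Y |- _ =>
      inversion Hx; subst; exists (subst0 e' Y); split;
      [apply steps_step; constructor; eapply value_par; eauto|apply par_subst0; auto] end.
  - eexists; split; [apply steps_refl|apply par_subst0; auto].
  - match goal with Hx : par_e (EConst _) ?X, Hy : par_e (EConst _) ?Y |- _ =>
      inversion Hx; inversion Hy; subst end.
    exists (EConst (CEqC c1 b)); split; [apply steps_step; constructor|constructor].
  - exists (EConst (CEqC c1 b)); split; [apply steps_refl|constructor].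
  - match goal with Hx : par_e (EConst _) ?X, Hy : par_e (EConst _) ?Y |- _ =>
      inversion Hx; inversion Hy; subst end.
    exists (EConst (eq_result c1 c2)); split; [apply steps_step; constructor|constructor].
  - exists (EConst (eq_result c1 c2)); split; [apply steps_refl|constructor].
Qed.

Theorem theoremC16 : forall e1 e2 : expr, par_e e1 e2 ->
  forall c : const, steps e1 (EConst c) <-> steps e2 (EConst c).
Proof.
  intros e1 e2 Hp c; split; intro Hs.
  - apply clos_rt_rt1n_iff in Hs. remember (EConst c) as ec eqn:Hec. revert e2 Hp. induction Hs; intros e2 Hp.
    + subst. inversion Hp; subst; apply steps_refl.
    + destruct (forward _ _ H _ Hp) as [e2' [? ?]].
      eapply steps_trans; eauto.
  - apply clos_rt_rt1n_iff in Hs. remember (EConst c) as ec eqn:Hec. revert e1 Hp. induction Hs; intros e1 Hp.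
    + subst. destruct (L3' _ _ Hp ltac:(constructor)) as [a4 [Ha1 [Ha2 Ha3]]].
      rewrite (value_par_const _ _ Ha2 Ha3) in Ha1. auto.
    + destruct (proj1 par_wpar _ _ Hp) as [m Hm].
      destruct (claimB (S m) _ _ _ Hm ltac:(lia) _ H) as [e4 [? ?]].
      eapply steps_trans; eauto.
Qed.
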